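(* Let $\theta_1,\theta_2>0$, $\theta=\theta_1+\theta_2$, $p=\theta_1/\theta$, and let \[ \mathcal{L}g(x)=x\big(g(1)-g(x)\big)+(1-x)\big(g(0)-g(x)\big)+\tfrac12(\theta_1-\theta x)g'(x). \] The eigenvalues of $\mathcal{L}$ (acting on polynomials) are $\lambda_0=0$, $\lambda_1=\theta/2$ and $\lambda_n=1+n\theta/2$ for $n\ge 2$. The corresponding right eigenvectors are monic polynomials $P_n$ with $\mathcal{L}P_n=-\lambda_nP_n$, given by $P_0(x)=1$, $P_1(x)=x-p$, and for $n\ge2$ \[ P_n(x)=(x-p)^n+c_{n1}(x-p)+c_{n0}, \] where \[ c_{n0}=-\frac{2/\theta}{n+2/\theta}\Big[p(1-p)^n+(1-p)(-p)^n\Big],\qquad c_{n1}=\frac{2/\theta}{n-1+2/\theta}\Big[(-p)^n-(1-p)^n\Big]. \]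
   Context: $\mathcal{L}$ is the generator of the two-type star-shaped $\Lambda$-Fleming–Viot process with mutation (whole-population replacement at rate 1, mutation at rate $\theta/2$ along lines with new type 1 with probability $p$). *)

(* Defs.v *)
From HB Require Import structures.
From mathcomp Require Import all_boot all_order all_algebra.
From mathcomp Require Import reals.
Set Implicit Arguments. Unset Strict Implicit. Unset Printing Implicit Defensive.
Import Order.TTheory GRing.Theory Num.Theory.
Local Open Scope ring_scope.

Section Gen.
Variable R : realType.

Definition Lgen (th1 th2 : R) (g : {poly R}) : {poly R} :=
  'X * (g.[1]%:P - g) + (1 - 'X) * (g.[0]%:P - g)
  + 2^-1 *: ((th1%:P - (th1 + th2) *: 'X) * g^`()).

Definition pmut (th1 th2 : R) : R := th1 / (th1 + th2).

Definition lam (th1 th2 : R) (n : nat) : R :=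
  match n with
  | 0 => 0
  | 1 => (th1 + th2) / 2
  | _ => 1 + n%:R * (th1 + th2) / 2
  end.

Definition c0 (th1 th2 : R) (n : nat) : R :=
  let th := th1 + th2 in let p := pmut th1 th2 in
  - ((2 / th) / (n%:R + 2 / th)) * (p * (1 - p) ^+ n + (1 - p) * (- p) ^+ n).

Definition c1 (th1 th2 : R) (n : nat) : R :=
  let th := th1 + th2 in let p := pmut th1 th2 in
  ((2 / th) / (n%:R - 1 + 2 / th)) * ((- p) ^+ n - (1 - p) ^+ n).

Definition Pn (th1 th2 : R) (n : nat) : {poly R} :=
  let p := pmut th1 th2 in
  match n with
  | 0 => 1
  | 1 => 'X - p%:P
  | _ => ('X - p%:P) ^+ n + c1 th1 th2 n *: ('X - p%:P) + (c0 th1 th2 n)%:P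
  end.

End Gen.

(* Main.v *)
Require Import Defs.
From HB Require Import structures.
From mathcomp Require Import all_boot all_order all_algebra.
From mathcomp Require Import reals.
From mathcomp Require Import ring lra.
Import Order.TTheory GRing.Theory Num.Theory.
Local Open Scope ring_scope.

Lemma c1_eq {R : realType} {th1 th2 : R} m : 0 < th1 + th2 ->
  c1 th1 th2 m.+2 * (1 + (m.+1)%:R * (th1+th2) / 2) =
  (- pmut th1 th2) ^+ m.+2 - (1 - pmut th1 th2) ^+ m.+2.
Proof.
move=> hth; rewrite /c1 /=.
set th := th1 + th2 in hth *; set p := pmut th1 th2.
set v := (- p) ^+ _; set u := (1 - p) ^+ _.
have h0 : th != 0 by rewrite gt_eqF.
have hm : 0 <= m%:R :> R by [].
have h1 : (m.+2)%:R - 1 + 2 / th != 0 :> R.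
  have h2 : 0 < 2 / th by rewrite divr_gt0.
  rewrite gt_eqF // -[m.+2]addn2 natrD. lra.
field; rewrite ?h0 ?h1 //=.
rewrite gt_eqF //; nra.
Qed.

Lemma c0_eq {R : realType} {th1 th2 : R} m : 0 < th1 + th2 ->
  c0 th1 th2 m.+2 * (1 + (m.+2)%:R * (th1+th2) / 2) =
  - (pmut th1 th2 * (1 - pmut th1 th2) ^+ m.+2 + (1 - pmut th1 th2) * (- pmut th1 th2) ^+ m.+2).
Proof.
move=> hth; rewrite /c0 /=.
set th := th1 + th2 in hth *; set p := pmut th1 th2.
set v := (- p) ^+ _; set u := (1 - p) ^+ _.
have h0 : th != 0 by rewrite gt_eqF.
have hm : 0 <= m%:R :> R by [].
have h2 : 0 < 2 / th by rewrite divr_gt0.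
have h1 : (m.+2)%:R + 2 / th != 0 :> R.
  rewrite gt_eqF // -[m.+2]addn2 natrD. lra.
field; rewrite ?h0 ?h1 //=.
rewrite gt_eqF //; nra.
Qed.

Lemma Lgen_eq (R : realType) (th1 th2 : R) (g : {poly R}) : th1 + th2 != 0 ->
  Lgen th1 th2 g = (g.[0] + pmut th1 th2 * (g.[1]-g.[0]))%:P
     + (g.[1]-g.[0]) *: ('X - (pmut th1 th2)%:P) - g
     - ((th1+th2)/2) *: (('X - (pmut th1 th2)%:P) * g^`()).
Proof.
move=> hth.
have thp : (th1 + th2) * pmut th1 th2 = th1 by rewrite /pmut mulrCA mulfV // mulr1.
have e : th1%:P - (th1 + th2) *: 'X = - (th1+th2) *: ('X - (pmut th1 th2)%:P) :> {poly R}.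
  rewrite -{1}thp -!mul_polyC polyCM polyCN; ring.
rewrite /Lgen e -!mul_polyC !(polyCN, polyCM, polyCB, polyCD); ring.
Qed.

Lemma eig2 (R : realType) (th1 th2 : R) m : 0 < th1 + th2 ->
  Lgen th1 th2 (Pn th1 th2 m.+2) = - lam th1 th2 m.+2 *: Pn th1 th2 m.+2.
Proof.
move=> hth.
have h0 : th1 + th2 != 0 by rewrite gt_eqF.
have E1 := c1_eq m hth; have E0 := c0_eq m hth.
rewrite Lgen_eq // /Pn /lam.
set p := pmut th1 th2 in E1 E0 *.
set th := th1 + th2 in E1 E0 h0 hth *.
move: E1 E0; set C1 := c1 th1 th2 m.+2; set C0 := c0 th1 th2 m.+2 => E1 E0.
have D : (('X - p%:P) ^+ m.+2)^`() = ('X - p%:P) ^+ m.+1 *+ m.+2.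
  by rewrite deriv_exp derivXsubC mul1r.
rewrite !derivD derivZ derivC D derivXsubC !hornerE.
set y := 'X - p%:P.
set Z := y ^+ m.+1.
rewrite (exprS y m.+1) -/Z.
set u := (1 - p) ^+ m.+2 in E1 E0 *.
set v := (- p) ^+ m.+2 in E1 E0 *.
rewrite -[Z *+ _]mulr_natr -polyC_natr.
have e2 : (m.+2)%:R = (m.+1)%:R + 1 :> R by rewrite [LHS]mulrSr.
rewrite e2 in E0 *.
set N := (m.+1)%:R in E1 E0 *.
clearbody u v Z y C1 C0 N p th.
have hu : u = v - C1 * (1 + N * th / 2) by rewrite E1; ring.
have hv : v = p * C1 * (1 + N * th / 2) - C0 * (1 + (N + 1) * th / 2).
  by rewrite E0 hu; ring.
rewrite hu hv -!mul_polyC ?alg_polyC.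
rewrite !(polyCN, polyCM, polyCB, polyCD).
ring.
Qed.
Lemma Lgen_alt (R : realType) (th1 th2 : R) (g : {poly R}) :
  Lgen th1 th2 g = 'X * (g.[1] - g.[0])%:P + (g.[0])%:P - g
     + 2^-1 *: (th1 *: g^`() - (th1+th2) *: ('X * g^`())).
Proof. rewrite /Lgen -!mul_polyC !(polyCN, polyCM, polyCB, polyCD); ring. Qed.

Lemma Lgen_coef (R : realType) (th1 th2 : R) (g : {poly R}) : g != 0 ->
  (Lgen th1 th2 g)`_(size g).-1 = - lam th1 th2 (size g).-1 * lead_coef g.
Proof.
move=> gn0.
set d := (size g).-1.
have sz : size g = d.+1 by rewrite prednK // size_poly_gt0.
have gd1 : g`_d.+1 = 0 by rewrite nth_default // sz.
rewrite lead_coefE -/d Lgen_alt !(coefD, coefB, coefN, coefZ, coefC, coefXM, coef_deriv) gd1 mul0rn.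
case: d sz gd1 => [|[|d]] sz gd1 /=.
- have -> : g = (g`_0)%:P by rewrite [LHS]size1_polyC ?sz.
  rewrite hornerC /lam coefC /=; ring.
- rewrite (horner_coef g 1) (horner_coef g 0) sz !big_ord_recl !big_ord0 /lam /=.
  rewrite /bump /= !expr0 !expr1; ring.
- rewrite /lam -[_ *+ d.+2]mulr_natr; ring.
Qed.

Lemma PnP (R : realType) (th1 th2 : R) n : 0 < th1 + th2 ->
  Pn th1 th2 n \is monic /\ size (Pn th1 th2 n) = n.+1 /\
  Lgen th1 th2 (Pn th1 th2 n) = - lam th1 th2 n *: Pn th1 th2 n.
Proof.
move=> hth.
have h0 : th1 + th2 != 0 by rewrite gt_eqF.
case: n => [|[|m]].
- rewrite /Pn /lam monic1 size_poly1; split=> //; split=> //.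
  rewrite Lgen_alt !hornerE -polyC1 derivC -!mul_polyC.
  rewrite !(polyCN, polyCM, polyCB, polyCD); ring.
- rewrite /Pn /lam /= monicXsubC size_XsubC; split=> //; split=> //.
  rewrite Lgen_eq // derivXsubC !hornerE.
  move: (pmut th1 th2) (th1 + th2) => p t.
  rewrite -!mul_polyC !(polyCN, polyCM, polyCB, polyCD, polyC1); ring.
- set y := 'X - (pmut th1 th2)%:P.
  set q := c1 th1 th2 m.+2 *: y + (c0 th1 th2 m.+2)%:P.
  have hs : (size q < size (y ^+ m.+2))%N.
    rewrite size_exp_XsubC; apply: leq_ltn_trans (size_polyD _ _) _.
    rewrite gtn_max; apply/andP; split.
      by apply: leq_ltn_trans (size_scale_leq _ _) _; rewrite size_XsubC.
    by apply: leq_ltn_trans (size_polyC_leq1 _) _.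
  have M : y ^+ m.+2 + q \is monic.
    by rewrite monicE lead_coefDl // -monicE monic_exp // monicXsubC.
  have S : size (y ^+ m.+2 + q) = m.+3 by rewrite size_polyDl // size_exp_XsubC.
  have PnE : Pn th1 th2 m.+2 = y ^+ m.+2 + q by rewrite /q addrA.
  rewrite -PnE in S M.
  split; [exact: M | split; [exact: S | exact: eig2]].
Qed.

Theorem theorem2 (R : realType) (th1 th2 : R) :
  0 < th1 -> 0 < th2 ->
  (* the eigenvalues of L on polynomials are exactly the lambda_n *)
  (forall mu : R,
      (exists g : {poly R}, g != 0 /\ Lgen th1 th2 g = - mu *: g)
      <-> (exists n : nat, mu = lam th1 th2 n)) /\
  (* P_n is a monic polynomial of degree n with L P_n = - lambda_n P_n *)
  (forall n : nat,
      Pn th1 th2 n \is monic /\ size (Pn th1 th2 n) = n.+1 /\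
      Lgen th1 th2 (Pn th1 th2 n) = - lam th1 th2 n *: Pn th1 th2 n).
Proof.
move=> h1 h2.
have hth : 0 < th1 + th2 by rewrite addr_gt0.
split; last by move=> n; apply: (@PnP R th1 th2 n hth).
move=> mu; split.
- case=> g [gn0 E]; exists (size g).-1.
  have := @Lgen_coef R th1 th2 g gn0.
  rewrite E coefZ -lead_coefE => H.
  apply: oppr_inj; apply: (mulIf _ H); by rewrite lead_coef_eq0.
- case=> n ->; exists (Pn th1 th2 n).
  have [M [_ E]] := @PnP R th1 th2 n hth; split => //; exact: monic_neq0.
Qed.
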